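(* For every $n\ge1$, $$\tilde S^{\,n-1}_{e_0}\big(e_+(z)\big)=\prod_{k=2}^n\big(1-q^{-2(k-1)}\big)\,e_+(z)^n,\qquad S^{\,n-1}_{e_0}\big(e_-(z)\big)=\prod_{k=2}^n\big(1-q^{2(k-1)}\big)\,e_-(z)^n,$$ $$S^{\,n-1}_{f_0}\big(f_+(z)\big)=\prod_{k=2}^n\big(q^{-2(k-1)}-1\big)\,f_+(z)^n,\qquad \tilde S^{\,n-1}_{f_0}\big(f_-(z)\big)=\prod_{k=2}^n\big(q^{2(k-1)}-1\big)\,f_-(z)^n.$$
   Context: $U=U_q(\widehat{\mathfrak{sl}}_2)$ in the Drinfeld new realization: currents $e(z)=\sum_ne_nz^{-n}$, $f(z)=\sum_nf_nz^{-n}$ with $(z-q^2w)e(z)e(w)=(q^2z-w)e(w)e(z)$, $(z-q^{-2}w)f(z)f(w)=(q^{-2}z-w)f(w)f(z)$, and $k=\psi^+_0$ with $ke_nk^{-1}=q^2e_n$, $kf_nk^{-1}=q^{-2}f_n$; $q$ not a root of unity. Half-currents: $e_+(z)=\sum_{n\ge0}e_nz^{-n}$, $e_-(z)=-\sum_{n<0}e_nz^{-n}$, $f_+(z)=\sum_{n>0}f_nz^{-n}$, $f_-(z)=-\sum_{n\le0}f_nz^{-n}$; $e_\pm(z)^n$, $f_\pm(z)^n$ are powers as formal series. Screening operators (applied coefficientwise): $S_{e_0}(x)=e_0x-kxk^{-1}e_0$, $S_{f_0}(x)=xf_0-f_0kxk^{-1}$, $\tilde S_{e_0}(x)=xe_0-e_0k^{-1}xk$,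 $\tilde S_{f_0}(x)=f_0x-k^{-1}xkf_0$. Empty products equal $1$. *)

(* Defs.v *)
From mathcomp Require Import all_boot all_order all_algebra.
Set Implicit Arguments. Unset Strict Implicit. Unset Printing Implicit Defensive.
Import GRing.Theory.
Local Open Scope ring_scope.

(* A formal series in one variable (z^{-1} or z) is given by its coefficient
   sequence c : nat -> A (c m = coefficient of the m-th power of the variable).
   [ser_pow c n m] is the m-th coefficient of the n-th power of the series
   (Cauchy product, non-commutative coefficients, ordered left to right). *)
Fixpoint ser_pow (A : ringType) (c : nat -> A) (n m : nat) : A :=
  match n with
  | 0 => (m == 0)%:R
  | n'.+1 => \sum_(i < m.+1) c i * ser_pow c n' (m - i)
  end.

(* e_+(z) = sum_{n>=0} e_n z^{-n}: coefficient of z^{-m}. *)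
Definition e_plus (A : ringType) (e : int -> A) (m : nat) : A := e (Posz m).
(* e_-(z) = - sum_{n<0} e_n z^{-n}: coefficient of z^{m}. *)
Definition e_minus (A : ringType) (e : int -> A) (m : nat) : A :=
  if m is 0 then 0 else - e (- Posz m).
(* f_+(z) = sum_{n>0} f_n z^{-n}: coefficient of z^{-m}. *)
Definition f_plus (A : ringType) (f : int -> A) (m : nat) : A :=
  if m is 0 then 0 else f (Posz m).
(* f_-(z) = - sum_{n<=0} f_n z^{-n}: coefficient of z^{m}. *)
Definition f_minus (A : ringType) (f : int -> A) (m : nat) : A :=
  - f (- Posz m).

Definition S_e0 (A : ringType) (e : int -> A) (k kinv x : A) : A :=
  e 0 * x - k * x * kinv * e 0.
Definition S_f0 (A : ringType) (f : int -> A) (k kinv x : A) : A :=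
  x * f 0 - f 0 * (k * x * kinv).
Definition St_e0 (A : ringType) (e : int -> A) (k kinv x : A) : A :=
  x * e 0 - e 0 * (kinv * x * k).
Definition St_f0 (A : ringType) (f : int -> A) (k kinv x : A) : A :=
  f 0 * x - kinv * x * k * f 0.

(* Coefficientwise form of (z - q^2 w) e(z)e(w) = (q^2 z - w) e(w)e(z),
   coefficient of z^{-a} w^{-b}. *)
Definition ee_rel (K : fieldType) (A : algType K) (q : K) (e : int -> A) :=
  forall a b : int,
    e (a + 1) * e b - q ^+ 2 *: (e a * e (b + 1))
    = q ^+ 2 *: (e b * e (a + 1)) - e (b + 1) * e a.

(* Coefficientwise form of (z - q^{-2} w) f(z)f(w) = (q^{-2} z - w) f(w)f(z). *)
Definition ff_rel (K : fieldType) (A : algType K) (q : K) (f : int -> A) :=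
  forall a b : int,
    f (a + 1) * f b - (q ^+ 2)^-1 *: (f a * f (b + 1))
    = (q ^+ 2)^-1 *: (f b * f (a + 1)) - f (b + 1) * f a.

(* Main.v *)
Require Import Defs.
From mathcomp Require Import all_boot all_order all_algebra.
From mathcomp Require Import ring zify.
Import GRing.Theory.
Set Implicit Arguments. Unset Strict Implicit. Unset Printing Implicit Defensive.
Local Open Scope ring_scope.

Lemma ser_powS (A : ringType) (c : nat -> A) n m :
  ser_pow c n.+1 m = \sum_(i < m.+1) c i * ser_pow c n (m - i)%N.
Proof. by []. Qed.

Lemma ser_powE (A : ringType) (c : nat -> A) n m M : (m <= M)%N ->
  ser_pow c n m = ((\poly_(i < M.+1) c i) ^+ n)`_m.
Proof.
elim: n m => [|n IH] m hm; first by rewrite expr0 coef1.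
rewrite ser_powS exprS coefM; apply: eq_bigr => i _.
have hi : (i < M.+1)%N by have := ltn_ord i; lia.
rewrite coef_poly hi IH //; lia.
Qed.

Lemma ser_pow_add (A : ringType) (c : nat -> A) a b m :
  ser_pow c (a + b) m = \sum_(i < m.+1) ser_pow c a i * ser_pow c b (m - i)%N.
Proof.
rewrite (ser_powE c _ (leqnn m)) exprD coefM; apply: eq_bigr => i _.
have := ltn_ord i => hi.
by rewrite -!(@ser_powE _ _ _ _ m) //; lia.
Qed.

Lemma ser_pow1 (A : ringType) (c : nat -> A) m : ser_pow c 1 m = c m.
Proof. by rewrite (ser_powE c _ (leqnn m)) expr1 coef_poly ltnSn. Qed.

Lemma ser_pow2 (A : ringType) (c : nat -> A) m :
  ser_pow c 2 m = \sum_(i < m.+1) c i * c (m - i)%N.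
Proof.
rewrite -[2%N]/(1 + 1)%N ser_pow_add; apply: eq_bigr => i _.
by rewrite !ser_pow1.
Qed.

Lemma half0 (K : fieldType) (V : lmodType K) (w : V) :
  (2 : K) != 0 -> w + w = 0 -> w = 0.
Proof.
move=> h2 hw; rewrite -[w]scale1r -(mulVf h2) -scalerA.
by rewrite scaler_nat (mulr2n w) hw scaler0.
Qed.

Lemma base_rel (K : fieldType) (A : algType K) (g : nat -> A) (u v : K) :
  (2 : K) != 0 ->
  (forall a b : nat, u *: (g a.+1 * g b) - v *: (g a * g b.+1)
                   = v *: (g b * g a.+1) - u *: (g b.+1 * g a)) ->
  forall m, (u - v) *: \sum_(i < m.+1) g i * g (m - i)%N
            = u *: (g 0%N * g m) - v *: (g m * g 0%N).
Proof.
move=> h2 G [|m]; first by rewrite big_ord1 scalerBl.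
set T := \sum_(i < m.+2) _.
pose S1 := \sum_(a < m.+1) g a.+1 * g (m - a)%N.
pose S3 := \sum_(a < m.+1) g a * g (m - a)%N.+1.
have T1 : T = g 0%N * g m.+1 + S1.
  rewrite /T big_ord_recl; congr (_ + _); apply: eq_bigr => i _; by [].
have T3 : T = S3 + g m.+1 * g 0%N.
  rewrite /T big_ord_recr /= subnn; congr (_ + _); apply: eq_bigr => i _.
  have := ltn_ord i => hi; by rewrite subSn.
have S2 : \sum_(a < m.+1) g (m - a)%N.+1 * g a = S1.
  rewrite /S1 (reindex_inj rev_ord_inj) /=; apply: eq_bigr => i _.
  have := ltn_ord i => hi.
  have -> : (m.+1 - i.+1)%N = (m - i)%N by lia.
  by have -> : (m - (m - i))%N = i by lia.
have S4 : \sum_(a < m.+1) g (m - a)%N * g a.+1 = S3.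
  rewrite /S3 (reindex_inj rev_ord_inj) /=; apply: eq_bigr => i _.
  have := ltn_ord i => hi.
  have -> : (m.+1 - i.+1)%N = (m - i)%N by lia.
  by have -> : (m - (m - i))%N = i by lia.
have E : u *: S1 - v *: S3 = v *: S3 - u *: S1.
  have Hs : \sum_(a < m.+1) (u *: (g a.+1 * g (m - a)%N) - v *: (g a * g (m - a)%N.+1))
     = \sum_(a < m.+1) (v *: (g (m - a)%N * g a.+1) - u *: (g (m - a)%N.+1 * g a)).
    by apply: eq_bigr => a _; exact: G.
  by rewrite !sumrB -!scaler_sumr S2 S4 in Hs.
have H : (u *: S1 - v *: S3) + (u *: S1 - v *: S3) = 0.
  by rewrite {2}E addrA subrK subrr.
have HS := subr0_eq (half0 h2 H).
by rewrite scalerBl {1}T1 T3 !scalerDr HS opprD addrA addrK.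
Qed.

Lemma sg_pow (K : fieldType) (A : algType K) (c : nat -> A) (sg : A -> A) (s : K) :
  (forall x y, sg (x + y) = sg x + sg y) -> sg 0 = 0 -> sg 1 = 1 ->
  (forall x y, sg (x * y) = sg x * sg y) -> (forall m, sg (c m) = s *: c m) ->
  forall n m, sg (ser_pow c n m) = s ^+ n *: ser_pow c n m.
Proof.
move=> sgD sg0 sg1 sgM sgc; elim=> [|n IH] m.
  by rewrite /= expr0 scale1r; case: (m == 0)%N; rewrite /= ?mulr1n ?mulr0n.
rewrite ser_powS (big_morph sg sgD sg0) scaler_sumr; apply: eq_bigr => i _.
by rewrite sgM sgc IH -scalerAr -scalerAl scalerA exprS mulrC.
Qed.

Lemma D_pow1 (K : fieldType) (A : algType K) (c : nat -> A) (D sg : A -> A)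
    (alpha s beta : K) :
  (forall x y, sg (x + y) = sg x + sg y) -> sg 0 = 0 -> sg 1 = 1 ->
  (forall x y, sg (x * y) = sg x * sg y) -> (forall m, sg (c m) = s *: c m) ->
  (forall x y, D (x + y) = D x + D y) -> D 0 = 0 -> D 1 = 0 ->
  (forall x y, D (x * y) = x * D y + D x * sg y) ->
  (forall m, D (c m) = alpha *: ser_pow c 2 m) -> alpha = beta * (1 - s) ->
  forall n m, D (ser_pow c n m) = (beta * (1 - s ^+ n)) *: ser_pow c n.+1 m.
Proof.
move=> sgD sg0 sg1 sgM sgc DD D0 D1 DM Dc ha; elim=> [|n IH] m.
  rewrite expr0 subrr mulr0 scale0r /=.
  by case: (m == 0)%N; rewrite /= ?mulr1n ?mulr0n.
rewrite ser_powS (big_morph D DD D0).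
under eq_bigr do rewrite DM IH Dc (sg_pow sgD sg0 sg1 sgM sgc).
have -> : beta * (1 - s ^+ n.+1) = beta * (1 - s ^+ n) + alpha * s ^+ n.
  by rewrite ha exprS; ring.
rewrite scalerDl {1}(ser_powS c n.+1 m) -(add2n n) (ser_pow_add c 2 n m).
rewrite !scaler_sumr -big_split; apply: eq_bigr => i _.
by rewrite -!scalerAr -scalerAl scalerA [s ^+ n * _]mulrC.
Qed.

Lemma D_pow2 (K : fieldType) (A : algType K) (c : nat -> A) (D sg : A -> A)
    (alpha s beta : K) :
  (forall x y, sg (x + y) = sg x + sg y) -> sg 0 = 0 -> sg 1 = 1 ->
  (forall x y, sg (x * y) = sg x * sg y) -> (forall m, sg (c m) = s *: c m) ->
  (forall x y, D (x + y) = D x + D y) -> D 0 = 0 -> D 1 = 0 ->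
  (forall x y, D (x * y) = D x * y + sg x * D y) ->
  (forall m, D (c m) = alpha *: ser_pow c 2 m) -> alpha = beta * (1 - s) ->
  forall n m, D (ser_pow c n m) = (beta * (1 - s ^+ n)) *: ser_pow c n.+1 m.
Proof.
move=> sgD sg0 sg1 sgM sgc DD D0 D1 DM Dc ha; elim=> [|n IH] m.
  rewrite expr0 subrr mulr0 scale0r /=.
  by case: (m == 0)%N; rewrite /= ?mulr1n ?mulr0n.
rewrite ser_powS (big_morph D DD D0).
under eq_bigr do rewrite DM IH Dc sgc.
have -> : beta * (1 - s ^+ n.+1) = alpha + s * (beta * (1 - s ^+ n)).
  by rewrite ha exprS; ring.
rewrite scalerDl {2}(ser_powS c n.+1 m) -(add2n n) (ser_pow_add c 2 n m).
rewrite !scaler_sumr -big_split; apply: eq_bigr => i _.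
by rewrite -!scalerAr -!scalerAl scalerA [_ * s]mulrC.
Qed.

Lemma iter_D (K : fieldType) (A : algType K) (c : nat -> A) (D : A -> A)
    (L : nat -> K) :
  (forall a x, D (a *: x) = a *: D x) ->
  (forall n m, D (ser_pow c n m) = L n *: ser_pow c n.+1 m) ->
  forall n m, (1 <= n)%N ->
  iter n.-1 D (c m) = (\prod_(2 <= j < n.+1) L (j - 1)%N) *: ser_pow c n m.
Proof.
move=> DZ DP [//|n] m _; elim: n => [|n IH].
  by rewrite big_geq // scale1r ser_pow1.
rewrite [iter _ _ _]/= IH DZ DP [in RHS]big_nat_recr // scalerA subSS subn0.
by [].
Qed.

Lemma shape1 (K : fieldType) (A : algType K) (a k kinv : A) (c : nat -> A) (s beta : K) :
  k * kinv = 1 -> kinv * k = 1 ->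
  (forall m, kinv * c m * k = s *: c m) ->
  (forall m, c m * a - a * (kinv * c m * k) = (beta * (1 - s)) *: ser_pow c 2 m) ->
  forall n m, (1 <= n)%N ->
  iter n.-1 (fun x => x * a - a * (kinv * x * k)) (c m)
  = (\prod_(2 <= j < n.+1) (beta * (1 - s ^+ (j - 1)%N))) *: ser_pow c n m.
Proof.
move=> hk hk' sgc Dc.
pose sg x := kinv * x * k.
apply: (@iter_D _ _ c (fun x => x * a - a * (kinv * x * k)) (fun n => beta * (1 - s ^+ n))).
  by move=> b x; rewrite scalerBr scalerAl scalerAr scalerAl scalerAr.
apply: (@D_pow1 _ _ c (fun x => x * a - a * (kinv * x * k)) sg (beta * (1 - s)) s beta) => //.
- by move=> x y; rewrite /sg mulrDr mulrDl.
- by rewrite /sg mulr0 mul0r.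
- by rewrite /sg mulr1.
- by move=> x y; rewrite /sg !mulrA -(mulrA _ k kinv) hk mulr1.
- by move=> x y; rewrite !(mulrDl, mulrDr) opprD addrACA.
- by rewrite /= !(mul0r, mulr0) subrr.
- by rewrite /= mulr1 hk' mulr1 GRing.mul1r subrr.
- move=> x y; rewrite /sg !mulrBr !mulrBl !mulrA.
  by rewrite -(mulrA _ k kinv) hk mulr1 addrA subrK.
Qed.

Lemma shape2 (K : fieldType) (A : algType K) (a k kinv : A) (c : nat -> A) (s beta : K) :
  k * kinv = 1 -> kinv * k = 1 ->
  (forall m, k * c m * kinv = s *: c m) ->
  (forall m, a * c m - k * c m * kinv * a = (beta * (1 - s)) *: ser_pow c 2 m) ->
  forall n m, (1 <= n)%N ->
  iter n.-1 (fun x => a * x - k * x * kinv * a) (c m)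
  = (\prod_(2 <= j < n.+1) (beta * (1 - s ^+ (j - 1)%N))) *: ser_pow c n m.
Proof.
move=> hk hk' sgc Dc.
pose sg x := k * x * kinv.
apply: (@iter_D _ _ c (fun x => a * x - k * x * kinv * a) (fun n => beta * (1 - s ^+ n))).
  by move=> b x; rewrite scalerBr scalerAr scalerAl scalerAl scalerAr.
apply: (@D_pow2 _ _ c (fun x => a * x - k * x * kinv * a) sg (beta * (1 - s)) s beta) => //.
- by move=> x y; rewrite /sg mulrDr mulrDl.
- by rewrite /sg mulr0 mul0r.
- by rewrite /sg mulr1.
- by move=> x y; rewrite /sg !mulrA -(mulrA _ kinv k) hk' mulr1.
- by move=> x y; rewrite !(mulrDl, mulrDr) opprD addrACA.
- by rewrite /= !(mul0r, mulr0) subrr.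
- by rewrite /= !mulr1 hk mul1r subrr.
- move=> x y; rewrite /sg !mulrBr !mulrBl !mulrA.
  by rewrite -(mulrA _ kinv k) hk' mulr1 addrA subrK.
Qed.

Lemma strip (A : ringType) (c g : nat -> A) m : (0 < m)%N -> c 0%N = 0 ->
  (forall i j, (0 < i)%N -> (0 < j)%N -> c i * c j = g i * g j) ->
  \sum_(i < m.+1) c i * c (m - i)%N
  = \sum_(i < m.+1) g i * g (m - i)%N - g 0%N * g m - g m * g 0%N.
Proof.
case: m => // m _ c0 H.
rewrite big_ord_recl big_ord_recr [in RHS]big_ord_recl [in RHS]big_ord_recr /=.
rewrite /bump /= !add1n subn0 subnn c0 mul0r mulr0 add0r addr0.
have -> : \sum_(i < m) c i.+1 * c (m.+1 - i.+1)%N = \sum_(i < m) g i.+1 * g (m.+1 - i.+1)%N.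
  apply: eq_bigr => i _; apply: H => //; have := ltn_ord i; lia.
by rewrite (addrC (g 0%N * g m.+1)) addrK addrK.
Qed.

Lemma lin_comb (K : fieldType) (V : lmodType K) (X Y T Z1 Z2 : V)
    (u v a1 b1 c1 a2 b2 c2 l : K) :
  (u - v) *: T = u *: X - v *: Y ->
  Z1 = a1 *: X + b1 *: Y + c1 *: T -> Z2 = a2 *: X + b2 *: Y + c2 *: T ->
  a1 - a2 = l * (- u) -> b1 - b2 = l * v -> c1 - c2 = l * (u - v) ->
  Z1 = Z2.
Proof.
move=> H -> -> ha hb hc.
have ha' : a1 = a2 + l * - u by rewrite -ha addrC subrK.
have hb' : b1 = b2 + l * v by rewrite -hb addrC subrK.
have hc' : c1 = c2 + l * (u - v) by rewrite -hc addrC subrK.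
have HQ : (l * - u) *: X + (l * v) *: Y + (l * (u - v)) *: T = 0.
  rewrite -!scalerA H -!scalerDr.
  by rewrite scaleNr (addrC (- _)) -opprB addNr scaler0.
rewrite ha' hb' hc'.
have e1 : (a2 + l * - u) *: X = a2 *: X + (l * - u) *: X by rewrite scalerDl.
have e2 : (b2 + l * v) *: Y = b2 *: Y + (l * v) *: Y by rewrite scalerDl.
have e3 : (c2 + l * (u - v)) *: T = c2 *: T + (l * (u - v)) *: T by rewrite scalerDl.
by rewrite e1 e2 e3 (addrACA (a2 *: X)) (addrACA (a2 *: X + b2 *: Y)) HQ addr0.
Qed.

Lemma conj_inv (K : fieldType) (A : algType K) (k kinv x : A) (a : K) :
  k * kinv = 1 -> kinv * k = 1 -> a != 0 ->
  k * x * kinv = a *: x -> kinv * x * k = a^-1 *: x.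
Proof.
move=> hk hk' ha H.
have E : kinv * (k * x * kinv) * k = x.
  by rewrite !mulrA hk' mul1r -mulrA hk' mulr1.
rewrite H -scalerAr -scalerAl in E.
by rewrite -{2}E scalerA mulVf // scale1r.
Qed.

Definition rel_gen (K : fieldType) (A : algType K) (Q : K) (e : int -> A) :=
  forall a b : int,
    e (a + 1) * e b - Q *: (e a * e (b + 1))
    = Q *: (e b * e (a + 1)) - e (b + 1) * e a.

Lemma relP (K : fieldType) (A : algType K) (Q : K) (e : int -> A) :
  rel_gen Q e -> forall a b : nat,
  1 *: (e (Posz a.+1) * e (Posz b)) - Q *: (e (Posz a) * e (Posz b.+1))
  = Q *: (e (Posz b) * e (Posz a.+1)) - 1 *: (e (Posz b.+1) * e (Posz a)).
Proof.
move=> H a b; have := H (Posz a) (Posz b).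
have E : forall n : nat, (Posz n + 1)%R = Posz n.+1 by move=> n; lia.
by rewrite !E !scale1r.
Qed.

Lemma relN (K : fieldType) (A : algType K) (Q : K) (e : int -> A) :
  rel_gen Q e -> forall a b : nat,
  Q *: (e (- Posz a.+1) * e (- Posz b)) - 1 *: (e (- Posz a) * e (- Posz b.+1))
  = 1 *: (e (- Posz b) * e (- Posz a.+1)) - Q *: (e (- Posz b.+1) * e (- Posz a)).
Proof.
move=> H a b; have := H (- Posz a.+1) (- Posz b.+1).
have E : forall n : nat, (- Posz n.+1 + 1)%R = - Posz n by move=> n; lia.
rewrite !E !scale1r => /(congr1 -%R); rewrite !opprB => ->.
by [].
Qed.

Lemma part1 (K : fieldType) (A : algType K) (q : K) (e : int -> A) (k kinv : A) :
  (2 : K) != 0 -> q != 0 -> k * kinv = 1 -> kinv * k = 1 ->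
  (forall n : int, k * e n * kinv = q ^+ 2 *: e n) -> ee_rel q e ->
  forall n : nat, (1 <= n)%N -> forall m : nat,
  iter n.-1 (St_e0 e k kinv) (e_plus e m)
  = (\prod_(2 <= j < n.+1) (1 - (q ^+ (2 * (j - 1)))^-1)) *: ser_pow (e_plus e) n m.
Proof.
move=> h2 hq hk hk' he HR n hn m.
have hq2 : q ^+ 2 != 0 by rewrite expf_neq0.
pose s := (q ^+ 2)^-1.
have sgc : forall m, kinv * e_plus e m * k = s *: e_plus e m.
  by move=> i; exact: (conj_inv hk hk' hq2 (he _)).
have Dc : forall m, e_plus e m * e 0 - e 0 * (kinv * e_plus e m * k)
                    = (1 * (1 - s)) *: ser_pow (e_plus e) 2 m.
  move=> i; rewrite sgc ser_pow2.
  have B := base_rel (g := e_plus e) (u := 1) (v := q ^+ 2) h2 (relP HR) i.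
  change (e 0) with (e_plus e 0%N).
  apply: (lin_comb (a1 := - s) (b1 := 1) (c1 := 0) (a2 := 0) (b2 := 0)
            (c2 := 1 * (1 - s)) (l := s) B).
  - by rewrite scale0r addr0 scale1r scaleNr -scalerAr addrC.
  - by rewrite !scale0r !add0r.
  - by rewrite subr0; ring.
  - by rewrite subr0 /s mulVf.
  - by rewrite /s add0r mul1r mulrBr mulr1 mulVf // opprB.
have H := shape1 hk hk' sgc Dc.
rewrite /St_e0 (H n m hn); congr (_ *: _); apply: eq_bigr => j _.
by rewrite mul1r /s exprVn exprM.
Qed.

Lemma rhs3 (K : fieldType) (V : lmodType K) (X Y T : V) (g : K) :
  g *: (T - X - Y) = (- g) *: X + (- g) *: Y + g *: T.
Proof. by rewrite !scalerBr !scaleNr [RHS]addrC addrA. Qed.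

Lemma part3 (K : fieldType) (A : algType K) (q : K) (f : int -> A) (k kinv : A) :
  (2 : K) != 0 -> q != 0 -> k * kinv = 1 -> kinv * k = 1 ->
  (forall n : int, k * f n * kinv = (q ^+ 2)^-1 *: f n) -> ff_rel q f ->
  forall n : nat, (1 <= n)%N -> forall m : nat,
  iter n.-1 (S_f0 f k kinv) (f_plus f m)
  = (\prod_(2 <= j < n.+1) ((q ^+ (2 * (j - 1)))^-1 - 1)) *: ser_pow (f_plus f) n m.
Proof.
move=> h2 hq hk hk' hf HR n hn m.
have hq2 : q ^+ 2 != 0 by rewrite expf_neq0.
pose s := (q ^+ 2)^-1.
have sgc : forall m, k * f_plus f m * kinv = s *: f_plus f m.
  by case=> [|i] /=; rewrite ?mulr0 ?mul0r ?scaler0 ?hf.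
have Dc : forall m, f_plus f m * f 0 - f 0 * (k * f_plus f m * kinv)
                    = (-1 * (1 - s)) *: ser_pow (f_plus f) 2 m.
  case=> [|i].
    by rewrite ser_pow2 big_ord1 /= !(mul0r, mulr0, scaler0) subrr.
  rewrite sgc ser_pow2 (@strip _ _ (fun n => f (Posz n))) //; last first.
    by move=> [|a] [|b].
  have B := base_rel (g := fun n => f (Posz n)) (u := 1) (v := s) h2 (relP HR) i.+1.
  change (f 0) with (f (Posz 0%N)).
  change (f_plus f i.+1) with (f (Posz i.+1)).
  apply: (lin_comb (a1 := - s) (b1 := 1) (c1 := 0) (a2 := - (-1 * (1 - s)))
            (b2 := - (-1 * (1 - s))) (c2 := -1 * (1 - s)) (l := 1) B).
  - by rewrite scale0r addr0 scale1r scaleNr -scalerAr addrC.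
  - exact: rhs3.
  - by ring.
  - by ring.
  - by ring.
have H := shape1 hk' hk sgc Dc.
rewrite /S_f0 (H n m hn); congr (_ *: _); apply: eq_bigr => j _.
by rewrite /s exprVn exprM; ring.
Qed.

Lemma part2 (K : fieldType) (A : algType K) (q : K) (e : int -> A) (k kinv : A) :
  (2 : K) != 0 -> q != 0 -> k * kinv = 1 -> kinv * k = 1 ->
  (forall n : int, k * e n * kinv = q ^+ 2 *: e n) -> ee_rel q e ->
  forall n : nat, (1 <= n)%N -> forall m : nat,
  iter n.-1 (S_e0 e k kinv) (e_minus e m)
  = (\prod_(2 <= j < n.+1) (1 - q ^+ (2 * (j - 1)))) *: ser_pow (e_minus e) n m.
Proof.
move=> h2 hq hk hk' he HR n hn m.
have sgc : forall m, k * e_minus e m * kinv = q ^+ 2 *: e_minus e m.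
  by case=> [|i] /=; rewrite ?mulr0 ?mul0r ?scaler0 // mulrN mulNr he scalerN.
have Dc : forall m, e 0 * e_minus e m - k * e_minus e m * kinv * e 0
                    = (1 * (1 - q ^+ 2)) *: ser_pow (e_minus e) 2 m.
  case=> [|i].
    by rewrite ser_pow2 big_ord1 /= !(mul0r, mulr0, scaler0) subrr.
  rewrite sgc ser_pow2 (@strip _ _ (fun n => e (- Posz n))) //; last first.
    by move=> [|a] [|b] //= _ _; rewrite mulrNN.
  have B := base_rel (g := fun n => e (- Posz n)) (u := q ^+ 2) (v := 1) h2 (relN HR) i.+1.
  change (e 0) with (e (- Posz 0%N)).
  change (e_minus e i.+1) with (- e (- Posz i.+1)).
  apply: (lin_comb (a1 := -1) (b1 := q ^+ 2) (c1 := 0) (a2 := - (1 * (1 - q ^+ 2)))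
            (b2 := - (1 * (1 - q ^+ 2))) (c2 := 1 * (1 - q ^+ 2)) (l := 1) B).
  - by rewrite scale0r addr0 mulrN scalerN mulNr opprK scaleN1r -scalerAl.
  - exact: rhs3.
  - by ring.
  - by ring.
  - by ring.
have H := shape2 hk hk' sgc Dc.
rewrite /S_e0 (H n m hn); congr (_ *: _); apply: eq_bigr => j _.
by rewrite mul1r exprM.
Qed.

Lemma part4 (K : fieldType) (A : algType K) (q : K) (f : int -> A) (k kinv : A) :
  (2 : K) != 0 -> q != 0 -> k * kinv = 1 -> kinv * k = 1 ->
  (forall n : int, k * f n * kinv = (q ^+ 2)^-1 *: f n) -> ff_rel q f ->
  forall n : nat, (1 <= n)%N -> forall m : nat,
  iter n.-1 (St_f0 f k kinv) (f_minus f m)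
  = (\prod_(2 <= j < n.+1) (q ^+ (2 * (j - 1)) - 1)) *: ser_pow (f_minus f) n m.
Proof.
move=> h2 hq hk hk' hf HR n hn m.
have hq2 : q ^+ 2 != 0 by rewrite expf_neq0.
have hs : (q ^+ 2)^-1 != 0 by rewrite invr_eq0.
pose s := (q ^+ 2)^-1.
have sgc : forall m, kinv * f_minus f m * k = q ^+ 2 *: f_minus f m.
  move=> i; rewrite /f_minus mulrN mulNr scalerN.
  by rewrite (conj_inv hk hk' hs (hf _)) invrK.
have Dc : forall m, f 0 * f_minus f m - kinv * f_minus f m * k * f 0
                    = (-1 * (1 - q ^+ 2)) *: ser_pow (f_minus f) 2 m.
  move=> i; rewrite sgc ser_pow2.
  have -> : \sum_(j < i.+1) f_minus f j * f_minus f (i - j)%N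
          = \sum_(j < i.+1) f (- Posz j) * f (- Posz (i - j)%N).
    by apply: eq_bigr => j _; rewrite /f_minus mulrNN.
  have B := base_rel (g := fun n => f (- Posz n)) (u := s) (v := 1) h2 (relN HR) i.
  change (f 0) with (f (- Posz 0%N)).
  rewrite /f_minus.
  apply: (lin_comb (a1 := -1) (b1 := q ^+ 2) (c1 := 0) (a2 := 0)
            (b2 := 0) (c2 := -1 * (1 - q ^+ 2)) (l := q ^+ 2) B).
  - by rewrite scale0r addr0 mulrN scalerN mulNr opprK scaleN1r -scalerAl.
  - by rewrite !scale0r !add0r.
  - rewrite subr0 /s; by field.
  - by rewrite subr0 mulr1.
  - rewrite /s; by field.
have H := shape2 hk' hk sgc Dc.
rewrite /St_f0 (H n m hn); congr (_ *: _); apply: eq_bigr => j _.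
by rewrite exprM; ring.
Qed.

Theorem mainTheorem5 (K : fieldType) (A : algType K) (q : K)
    (e f : int -> A) (k kinv : A) :
  [pchar K] =i pred0 ->
  q != 0 ->
  (forall r : nat, (0 < r)%N -> q ^+ r != 1) ->
  k * kinv = 1 -> kinv * k = 1 ->
  (forall n : int, k * e n * kinv = q ^+ 2 *: e n) ->
  (forall n : int, k * f n * kinv = (q ^+ 2)^-1 *: f n) ->
  ee_rel q e -> ff_rel q f ->
  forall n : nat, (1 <= n)%N -> forall m : nat,
    [/\ iter n.-1 (St_e0 e k kinv) (e_plus e m)
          = (\prod_(2 <= j < n.+1) (1 - (q ^+ (2 * (j - 1)))^-1))
              *: ser_pow (e_plus e) n m,
        iter n.-1 (S_e0 e k kinv) (e_minus e m)
          = (\prod_(2 <= j < n.+1) (1 - q ^+ (2 * (j - 1))))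
              *: ser_pow (e_minus e) n m,
        iter n.-1 (S_f0 f k kinv) (f_plus f m)
          = (\prod_(2 <= j < n.+1) ((q ^+ (2 * (j - 1)))^-1 - 1))
              *: ser_pow (f_plus f) n m
      & iter n.-1 (St_f0 f k kinv) (f_minus f m)
          = (\prod_(2 <= j < n.+1) (q ^+ (2 * (j - 1)) - 1))
              *: ser_pow (f_minus f) n m].
Proof.
move=> hch hq _ hk hk' he hf HE HF n hn m.
have h2 : (2 : K) != 0 by rewrite ((pcharf0P K).1 hch 2).
split.
- exact: part1.
- exact: part2.
- exact: part3.
- exact: part4.
Qed.
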